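(* Let $q$ be a prime power and $X\subseteq\mathbb{P}^2$ the Hermitian curve over $\mathbb{F}_{q^2}$. Fix an integer $e\in\{2,\dots,q+1\}$ and a point $P\in X(\mathbb{F}_{q^2})$. Let $E\subseteq X$ be the divisor $eP$, seen as a closed degree $e$ subscheme of $\mathbb{P}^2$. Let $T\subseteq\mathbb{P}^2$ be any effective divisor (a plane curve, possibly with multiple components) of degree at most $e-1$ containing $E$. Then $L_{X,P}\subseteq T$, i.e. $L_{X,P}$ is one of the components of $T$.
   Context: $\mathbb{P}^2$ is the projective plane over $\mathbb{F}_{q^2}$ with coordinates $(x:y:z)$. The Hermitian curve $X$ is the projective plane curve with affine equation $y+y^q=x^{q+1}$; it is smooth of degree $q+1$. For $P\in X(\mathbb{F}_{q^2})$, $L_{X,P}$ denotes the tangent line to $X$ at $P$. *)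

(* Defs.v *)
(* with multinomials' mpoly for polynomials in x = 'X_0, y = 'X_1, z = 'X_2. *)
From mathcomp Require Import all_boot all_algebra.
From mathcomp Require Import mpoly.

Set Implicit Arguments.
Unset Strict Implicit.
Unset Printing Implicit Defensive.

Import GRing.Theory.
Local Open Scope ring_scope.

Section Hermitian.
Variable F : fieldType.

(* Homogeneous Hermitian polynomial  y z^q + y^q z - x^(q+1)
   (affine equation y + y^q = x^(q+1) in the chart z = 1). *)
Definition herm_poly (q : nat) : {mpoly F[3]} :=
  'X_1 * 'X_2 ^+ q + 'X_1 ^+ q * 'X_2 - 'X_0 ^+ q.+1.

Definition proj_point (p : 'I_3 -> F) : Prop := exists i, p i != 0.

Definition tangent_line (H : {mpoly F[3]}) (p : 'I_3 -> F) : {mpoly F[3]} :=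
  \sum_(i < 3) ((H^`M(i)).@[p])%:MP * 'X_i.

(* Generators of the homogeneous ideal I_p of the point p : 2x2 minors. *)
Definition point_ideal_gens (p : 'I_3 -> F) : seq {mpoly F[3]} :=
  [seq (p i)%:MP * 'X_j - (p j)%:MP * 'X_i | i <- enum 'I_3, j <- enum 'I_3].

Fixpoint pow_gens (gs : seq {mpoly F[3]}) (e : nat) : seq {mpoly F[3]} :=
  match e with
  | 0 => [:: 1]
  | e'.+1 => [seq g * h | g <- gs, h <- pow_gens gs e']
  end.

Definition in_ideal (gs : seq {mpoly F[3]}) (f : {mpoly F[3]}) : Prop :=
  exists c : 'I_(size gs) -> {mpoly F[3]}, f = \sum_(i < size gs) c i * gs`_i.

(* The closed subscheme E = eP of the curve {H = 0} (P smooth), seen in P^2,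
   is contained in the plane curve T = {G = 0}.  Locally at P the ideal of E
   in O_{P^2,P} is (H) + m_P^e; so E \subseteq T iff G lies in the
   localisation at P of the homogeneous ideal (H) + I_P^e, i.e. iff
   S * G lies in (H) + I_P^e for some S with S(P) <> 0. *)
Definition subscheme_contained (H : {mpoly F[3]}) (p : 'I_3 -> F) (e : nat)
    (G : {mpoly F[3]}) : Prop :=
  exists S : {mpoly F[3]},
    S.@[p] != 0 /\ in_ideal (H :: pow_gens (point_ideal_gens p) e) (S * G).

End Hermitian.

(* Main.v *)
Require Import Defs.
From mathcomp Require Import all_boot all_algebra all_field.
From mathcomp Require Import mpoly.
From mathcomp Require Import ring zify.
Set Implicit Arguments.
Unset Strict Implicit.
Unset Printing Implicit Defensive.
Import GRing.Theory.
Local Open Scope ring_scope.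

Lemma mderiv_exp n (R : comNzRingType) (i : 'I_n) (p : {mpoly R[n]}) k :
  (p ^+ k.+1)^`M(i) = (p ^+ k * p^`M(i)) *+ k.+1.
Proof.
elim: k => [|k IH]; first by rewrite !expr0 !mul1r expr1.
rewrite exprS mderivM IH mulrnAr mulrA -exprS (mulrS _ k.+1) mulrC.
done.
Qed.

Lemma mderivXU n (R : nzRingType) (i j : 'I_n) : ('X_j : {mpoly R[n]})^`M(i) = (i == j)%:R.
Proof.
rewrite mderivX mnm1E eq_sym. case: (i =P j) => [->|_]; last by rewrite scale0r.
have -> : (U_(j) - U_(j) = 0)%MM by apply/mnmP=> k; rewrite mnmBE subnn mnm0E.
by rewrite scale1r mpolyX0.
Qed.

Lemma sum3 (R : nmodType) (f : 'I_3 -> R) : \sum_(i < 3) f i = f 0 + f 1 + f 2.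
Proof. rewrite !big_ord_recl big_ord0 addr0 addrA. congr (f _ + f _ + f _); exact: val_inj. Qed.

Lemma mderiv_expn n (R : comNzRingType) (i : 'I_n) (p : {mpoly R[n]}) k :
  (p ^+ k)^`M(i) = (p ^+ k.-1 * p^`M(i)) *+ k.
Proof. case: k => [|k]; first by rewrite expr0 -mpolyC1 mderivC mulr0n. exact: mderiv_exp. Qed.

Section Tan.
Variable F : fieldType.
Variable q : nat.
Hypothesis qpos : (0 < q)%N.
Hypothesis qF0 : (q%:R : F) = 0.
Variable P : 'I_3 -> F.
Let e01 : ((0:'I_3) == 1) = false. Proof. by []. Qed.
Let e02 : ((0:'I_3) == 2) = false. Proof. by []. Qed.
Let e12 : ((1:'I_3) == 2) = false. Proof. by []. Qed.
Let e10 : ((1:'I_3) == 0) = false. Proof. by []. Qed.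
Let e20 : ((2:'I_3) == 0) = false. Proof. by []. Qed.
Let e21 : ((2:'I_3) == 1) = false. Proof. by []. Qed.
Let qF1 : (q.+1%:R : F) = 1. Proof. by rewrite mulrS qF0 addr0. Qed.

Let pq : q.+1.-1 = q. Proof. by []. Qed.
Let qpq : q.-1.+1 = q. Proof. by rewrite prednK. Qed.

Lemma mevalXn (v : 'I_3 -> F) (p : {mpoly F[3]}) k : (p ^+ k).@[v] = p.@[v] ^+ k.
Proof. exact: rmorphXn. Qed.

Let mq0 (x : F) : x *+ q = 0. Proof. by rewrite -mulr_natr qF0 mulr0. Qed.
Let mq1 (x : F) : x *+ q.+1 = x. Proof. by rewrite -mulr_natr qF1 mulr1. Qed.

Ltac dtac := rewrite /herm_poly mderivB mderivD !mderivM !mderiv_expn !mderivXU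
  !(mevalB, mevalD, mevalM, mevalMn, mevalXn, mevalXU, meval1) ?pq
  ?eqxx ?e01 ?e02 ?e12 ?e10 ?e20 ?e21 ?mulr0n ?mulr1n ?mq0 ?mq1.

Lemma ell0 : ((herm_poly F q)^`M(0)).@[P] = - P 0 ^+ q.
Proof. dtac; ring. Qed.
Lemma ell1 : ((herm_poly F q)^`M(1)).@[P] = P 2 ^+ q.
Proof. dtac; ring. Qed.
Lemma ell2 : ((herm_poly F q)^`M(2)).@[P] = P 1 ^+ q.
Proof. dtac; ring. Qed.
End Tan.

Lemma mmap_ext n (R S : nzRingType) (f1 f2 : R -> S) (h1 h2 : 'I_n -> S) p :
  f1 =1 f2 -> h1 =1 h2 -> mmap f1 h1 p = mmap f2 h2 p.
Proof.
move=> ef eh; rewrite /mmap; apply: eq_bigr => m _; rewrite ef; congr (_ * _).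
by apply: mmap1_eq.
Qed.

Lemma mmap_rmorph n (R : nzRingType) (S T : comNzRingType) (f : R -> S) (h : 'I_n -> S)
  (phi : {rmorphism S -> T}) p :
  phi (mmap f h p) = mmap (phi \o f) (phi \o h) p.
Proof.
rewrite /mmap rmorph_sum; apply: eq_bigr => m _; rewrite rmorphM /mmap1 rmorph_prod.
congr (_ * _); apply: eq_bigr => i _; by rewrite rmorphXn.
Qed.

Lemma poly_low (A : idomainType) (s g r : {poly A}) e :
  s`_0 != 0 -> s * g = 'X^e * r -> (size g <= e)%N -> g = 0.
Proof.
move=> s0 hsg hg.
have low : forall k, (k < e)%N -> g`_k = 0.
  elim/ltn_ind => k IH ke.
  have := congr1 (fun p : {poly A} => p`_k) hsg; rewrite /= coefXnM ke coefM big_ord_recl /=.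
  rewrite subn0 big1 ?addr0; first by move/eqP; rewrite mulf_eq0 (negbTE s0) /= => /eqP.
  move=> i _; rewrite IH ?mulr0 //; last by apply: leq_ltn_trans ke; apply: leq_subr.
  by have := ltn_ord i; rewrite /bump /=; lia.
apply/polyP => k; rewrite coef0; case: (ltnP k e) => ke; first exact: low.
by rewrite nth_default // (leq_trans hg ke).
Qed.

Lemma herm_line (R : comNzRingType) (q : nat)
  (frob : forall x y : R, (x + y) ^+ q = x ^+ q + y ^+ q)
  (p0 p1 p2 d0 d1 d2 t : R) :
  p1 * p2 ^+ q + p1 ^+ q * p2 - p0 ^+ q.+1 = 0 ->
  - p0 ^+ q * d0 + p2 ^+ q * d1 + p1 ^+ q * d2 = 0 ->
  p1 * d2 ^+ q + p2 * d1 ^+ q - p0 * d0 ^+ q = 0 ->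
  (p1 + t * d1) * (p2 + t * d2) ^+ q + (p1 + t * d1) ^+ q * (p2 + t * d2)
    - (p0 + t * d0) ^+ q.+1 =
  t ^+ q.+1 * (d1 * d2 ^+ q + d1 ^+ q * d2 - d0 ^+ q.+1).
Proof.
move=> HP HL HC.
rewrite !exprS !frob !exprMn.
rewrite exprS in HP.
move: HP HL HC; move: (p0 ^+ q) (p1 ^+ q) (p2 ^+ q) (d0 ^+ q) (d1 ^+ q) (d2 ^+ q) (t ^+ q)
  => P0 P1 P2 D0 D1 D2 T HP HL HC.
apply/eqP; rewrite -subr_eq0; apply/eqP.
transitivity ((p1 * P2 + P1 * p2 - p0 * P0) + t * (- P0 * d0 + P2 * d1 + P1 * d2)
   + T * (p1 * D2 + p2 * D1 - p0 * D0)); first by ring.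
by rewrite HP HL HC !mulr0 !addr0.
Qed.

Lemma gen_line (R : comNzRingType) (pi pj di dj t : R) :
  pi * (pj + t * dj) - pj * (pi + t * di) = t * (pi * dj - pj * di).
Proof. ring. Qed.

Lemma size_mul_le2 (S : comNzRingType) (a b : {poly S}) x y :
  (size a <= x.+1)%N -> (size b <= y.+1)%N -> (size (a * b)%R <= (x + y).+1)%N.
Proof.
move=> ha hb; apply: leq_trans (size_mul_leq a b) _.
move: ha hb; move: (size a) (size b) => sa sb; lia.
Qed.

Lemma size_mmap1_le n (S : comNzRingType) (h : 'I_n -> {poly S}) m :
  (forall i, size (h i) <= 2)%N -> (size (mmap1 h m) <= (mdeg m).+1)%N.
Proof.
move=> hh; rewrite /mmap1 mdegE.
elim/big_rec2: _ => [|i a b _ hb]; first by rewrite size_poly1.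
apply: (size_mul_le2 _ hb); apply: leq_trans (size_exp_leq _ _) _.
have := hh i; case: (size (h i)) => [|[|[|]]] //= _; rewrite ?mul0n ?mul1n //.
Qed.

Lemma size_mmap_le n (R : nzRingType) (S : comNzRingType) (f : R -> {poly S})
  (h : 'I_n -> {poly S}) p d :
  (forall c, size (f c) <= 1)%N -> (forall i, size (h i) <= 2)%N ->
  (forall m, m \in msupp p -> mdeg m <= d)%N -> (size (mmap f h p) <= d.+1)%N.
Proof.
move=> hf hh hp; rewrite /mmap big_seq.
elim/big_rec: _ => [|m a mp ha]; first by rewrite size_poly0.
apply: leq_trans (size_add _ _) _; rewrite geq_max ha andbT.
rewrite -(add0n d); apply: size_mul_le2; first exact: hf.
apply: leq_trans (size_mmap1_le _ hh) _; rewrite ltnS; exact: hp.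
Qed.

Lemma sigma_div n (F : fieldType) (L : {mpoly F[n]}) (s : 'I_n -> {mpoly F[n]})
  (hs : forall i, exists Q, 'X_i - s i = L * Q) (f : {mpoly F[n]}) :
  exists Q, f - mmap (@mpolyC n F) s f = L * Q.
Proof.
pose phi := mmap (@mpolyC n F) s.
pose D g := exists Q, g - phi g = L * Q.
have DM g h : D g -> D h -> D (g * h).
  move=> [Qg eg] [Qh eh]; exists (g * Qh + Qg * phi h).
  rewrite /phi rmorphM -/phi mulrDr mulrA (mulrC L g) -mulrA -eh mulrA -eg.
  rewrite mulrBr mulrBl.
  by rewrite addrA subrK.
have DD g h : D g -> D h -> D (g + h).
  move=> [Qg eg] [Qh eh]; exists (Qg + Qh).
  by rewrite /phi rmorphD -/phi mulrDr -eg -eh opprD addrACA.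
have D0 : D 0 by exists 0; rewrite /phi rmorph0 subr0 mulr0.
have DC c : D c%:MP by exists 0; rewrite /phi mmapC subrr mulr0.
have DX i : D 'X_i by rewrite /D /phi mmapX mmap1U.
have DXn i k : D ('X_i ^+ k).
  elim: k => [|k IH]; first by rewrite expr0 -mpolyC1.
  by rewrite exprS; apply: (DM).
change (D f); rewrite [f]mpolyE; apply: (big_ind D) => // m ?.
rewrite -mul_mpolyC; apply: (DM) => //; rewrite mpolyXE_id.
apply: (big_ind D) => //; first by rewrite -mpolyC1.


Qed.


Lemma pow_gens_div (F : fieldType) (R : comNzRingType)
  (ev : {rmorphism {mpoly F[3]} -> {poly R}}) gs :
  (forall g, g \in gs -> exists r, ev g = 'X * r) ->
  forall e g, g \in pow_gens gs e -> exists r, ev g = 'X^e * r.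
Proof.
move=> hgs; elim=> [|e IH] g /=.
  by rewrite inE => /eqP ->; exists 1; rewrite rmorph1 expr0 mulr1.
case/allpairsP => [[g1 h] [/= g1in hin ->]].
have [r1 e1] := hgs _ g1in; have [r2 e2] := IH _ hin.
by exists (r1 * r2); rewrite rmorphM e1 e2 exprS; ring.
Qed.


Theorem lemma3p2 (F : finFieldType) (q : nat)
    (hq : exists (l k : nat), prime l /\ (0 < k)%N /\ q = (l ^ k)%N)
    (hF : #|F| = (q ^ 2)%N)
    (e : nat) (he : (2 <= e <= q.+1)%N)
    (P : 'I_3 -> F) (hP : proj_point P) (hPX : (herm_poly F q).@[P] = 0)
    (G : {mpoly F[3]}) (d : nat) (hG0 : G != 0) (hGh : G \is d.-homog)
    (hd : (d <= e.-1)%N)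
    (hET : subscheme_contained (herm_poly F q) P e G) :
  exists Q : {mpoly F[3]}, G = tangent_line (herm_poly F q) P * Q.
Proof.
have [l [k [hl [hk hqlk]]]] := hq.
have lF : l \in [pchar F].
  apply: (@card_finPcharP F l (k * 2)) => //. by rewrite hF hqlk expnM.
have qnat (R : nzRingType) : l \in [pchar R] -> ([pchar R]).-nat q.
  move=> hc; rewrite hqlk pnatX; apply/orP; left.
  by rewrite pnatE // inE.
have qF0 : (q%:R : F) = 0.
  rewrite hqlk natrX. by move: lF => /andP [_ /eqP ->]; rewrite expr0n gtn_eqF.
have frobF (x : F) : x ^+ q ^+ q = x by rewrite -exprM mulnn -hF expf_card.
have qpos : (0 < q)%N by rewrite hqlk expn_gt0 prime_gt0.
pose ell i := ((herm_poly F q)^`M(i)).@[P].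
have l0 : ell 0 = - P 0 ^+ q by exact: ell0.
have l1 : ell 1 = P 2 ^+ q by exact: ell1.
have l2 : ell 2 = P 1 ^+ q by exact: ell2.
have hPX' : P 1 * P 2 ^+ q + P 1 ^+ q * P 2 - P 0 ^+ q.+1 = 0.
  by move: hPX; rewrite /herm_poly !(mevalB, mevalD, mevalM, mevalXn, mevalXU).
have [j hj] : exists j, ell j != 0.
  case: hP => i; have : i \in [:: 0; 1; 2] by case: i => [[|[|[|]]]].
  rewrite !inE => /or3P [] /eqP -> hi.
  - by exists 0; rewrite l0 oppr_eq0 expf_neq0.
  - by exists 2; rewrite l2 expf_neq0.
  - by exists 1; rewrite l1 expf_neq0.
set L := tangent_line (herm_poly F q) P.
have LE : L = \sum_(i < 3) (ell i)%:MP * 'X_i by [].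
pose s i := 'X_i - ((i == j)%:R * (ell j)^-1)%:MP * L.
have hs i : exists Q, 'X_i - s i = L * Q.
  by exists (((i == j)%:R * (ell j)^-1)%:MP); rewrite /s opprB addrC subrK mulrC.
have Ls : \sum_(i < 3) (ell i)%:MP * s i = 0.
  rewrite /s; under eq_bigr do rewrite mulrBr.
  rewrite sumrB -LE.
  have -> : \sum_(i < 3) (ell i)%:MP * (((i == j)%:R * (ell j)^-1)%:MP * L) = L.
    rewrite (bigD1 j) //= big1 ?addr0; last first.
      by move=> i /negbTE ->; rewrite mul0r rmorph0 mul0r mulr0.
    by rewrite eqxx mul1r mulrA -rmorphM divff // rmorph1 mul1r.
  by rewrite subrr.
pose D i := s i - (P i)%:MP.
have LD3 : - (P 0)%:MP ^+ q * D 0 + (P 2)%:MP ^+ q * D 1 + (P 1)%:MP ^+ q * D 2 = 0.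
  have : \sum_(i < 3) (ell i)%:MP * D i = 0.
    rewrite /D; under eq_bigr do rewrite mulrBr. rewrite sumrB Ls sub0r.
    under eq_bigr do rewrite -rmorphM. rewrite -rmorph_sum sum3 l0 l1 l2.
    have -> : - P 0 ^+ q * P 0 + P 2 ^+ q * P 1 + P 1 ^+ q * P 2 = 0.
      by rewrite -hPX' exprS; ring.
    by rewrite rmorph0 oppr0.
  by rewrite sum3 l0 l1 l2 rmorphN !rmorphXn.
have lA : l \in [pchar {mpoly F[3]}] := rmorph_pchar (@mpolyC 3 F) lF.
have frobA (x y : {mpoly F[3]}) : (x + y) ^+ q = x ^+ q + y ^+ q := exprDn_pchar x y (qnat _ lA).
have frobNA (x : {mpoly F[3]}) : (- x) ^+ q = - x ^+ q := exprNn_pchar x (qnat _ lA).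
have frobCA (x : F) : (x%:MP : {mpoly F[3]}) ^+ q ^+ q = x%:MP by rewrite -!rmorphXn frobF.
have conj : (P 1)%:MP * D 2 ^+ q + (P 2)%:MP * D 1 ^+ q - (P 0)%:MP * D 0 ^+ q = 0.
  have h0 : (0 : {mpoly F[3]}) ^+ q = 0 by rewrite -(prednK qpos) exprS mul0r.
  move: LD3; move: (D 0) (D 1) (D 2) => x0 x1 x2 H.
  have := congr1 (fun x => x ^+ q) H; rewrite /= h0.
  rewrite !frobA !exprMn frobNA !frobCA => <-.
  move: (x0 ^+ q) (x1 ^+ q) (x2 ^+ q) => x y z; ring.
have hD i : s i = (P i)%:MP + D i by rewrite /D addrC subrK.
clearbody D; clearbody s.
pose fC : {rmorphism F -> {poly {mpoly F[3]}}} := (@polyC _ \o @mpolyC 3 F)%FUN.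
pose w i := fC (P i) + 'X * (D i)%:P.
pose ev : {rmorphism {mpoly F[3]} -> {poly {mpoly F[3]}}} := mmap fC w.
have evX i : ev 'X_i = w i by rewrite /ev /= mmapX mmap1U.
have evC x : ev x%:MP = fC x by rewrite /ev /= mmapC.
have lB : l \in [pchar {poly {mpoly F[3]}}] := rmorph_pchar fC lF.
have frobB (x y : {poly {mpoly F[3]}}) : (x + y) ^+ q = x ^+ q + y ^+ q :=
  exprDn_pchar x y (qnat _ lB).
have evH : exists r, ev (herm_poly F q) = 'X^e * r.
  have HP := congr1 fC hPX'; rewrite rmorph0 !(rmorphB, rmorphD, rmorphM, rmorphXn) in HP.
  have HL := congr1 (@polyC _) LD3; rewrite rmorph0 !(rmorphB, rmorphD, rmorphN, rmorphM, rmorphXn) in HL.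
  have HC := congr1 (@polyC _) conj; rewrite rmorph0 !(rmorphB, rmorphD, rmorphN, rmorphM, rmorphXn) in HC.
  have := @herm_line _ _ frobB _ _ _ _ _ _ 'X HP HL HC.
  rewrite /herm_poly !(rmorphB, rmorphD, rmorphM, rmorphXn) !evX /w => ->.
  exists ('X^(q.+1 - e) * ((D 1)%:P * (D 2)%:P ^+ q + (D 1)%:P ^+ q * (D 2)%:P - (D 0)%:P ^+ q.+1)).
  by rewrite mulrA -exprD subnKC //; case/andP: he.
have evGen : forall g, g \in point_ideal_gens P -> exists r, ev g = 'X * r.
  move=> g /allpairsP [[i j'] [_ _ ->]] /=.
  exists ((P i)%:MP * D j' - (P j')%:MP * D i)%:P.
  rewrite rmorphB !rmorphM !evC !evX /w gen_line.
  by rewrite rmorphB !rmorphM.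
have [S [hS [c hc]]] := hET.
have hsum : exists r, ev S * ev G = 'X^e * r.
  rewrite -rmorphM hc rmorph_sum.
  apply: (big_ind (fun x => exists r, x = 'X^e * r)).
  - by exists 0; rewrite mulr0.
  - by move=> x y [rx ->] [ry ->]; exists (rx + ry); rewrite mulrDr.
  move=> i _; rewrite rmorphM.
  set gs := herm_poly F q :: _.
  have : gs`_i \in gs by apply: mem_nth.
  rewrite inE => /orP [/eqP ->|hin].
    by have [r ->] := evH; exists (ev (c i) * r); rewrite mulrCA.
  have [r ->] := pow_gens_div evGen hin.
  by exists (ev (c i) * r); rewrite mulrCA.
have [r hr] := hsum.
have s0 : (ev S)`_0 != 0.
  rewrite -horner_coef0 -horner_evalE /ev /= mmap_rmorph.
  have -> : mmap (horner_eval 0 \o fC) (horner_eval 0 \o w) S =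
            mmap (@mpolyC 3 F \o idfun) (@mpolyC 3 F \o P) S.
    apply: mmap_ext => [x|i] /=; rewrite horner_evalE /w; first by rewrite hornerC.
    by rewrite /fC /= hornerD hornerM hornerX !hornerC mul0r addr0.
  by rewrite -mmap_rmorph mpolyC_eq0.
have hsz : (size (ev G) <= e)%N.
  apply: (@leq_trans d.+1); last by move: hd he => /= hd /andP [he1 _]; lia.
  apply: size_mmap_le.
  - by move=> x; exact: size_polyC_leq1.
  - move=> i; rewrite /w; apply: leq_trans (size_add _ _) _; rewrite geq_max.
    rewrite (leq_trans (size_polyC_leq1 _)) //=.
    apply: (@leq_trans (1 + 0).+1) => //; apply: size_mul_le2; first by rewrite size_polyX.
    exact: size_polyC_leq1.
  - by move=> m; move/dhomogP: hGh => h /h ->.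
have evG0 : ev G = 0 := poly_low s0 hr hsz.
have sG0 : mmap (@mpolyC 3 F) s G = 0.
  have := congr1 (horner_eval 1) evG0; rewrite rmorph0 /ev /= mmap_rmorph => <-.
  apply: mmap_ext => [x|i] /=; rewrite horner_evalE /w; first by rewrite hornerC.
  by rewrite /fC /= hornerD hornerM hornerX !hornerC mul1r hD.
have [Q hQ] := sigma_div hs G.
by exists Q; rewrite -hQ sG0 subr0.
Qed.
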